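(* Let $U_n\subset C^n([a,b],\mathbb{K})$ ($\mathbb{K}=\mathbb{R}$ or $\mathbb{C}$, $a\ne b$) be a subspace of dimension $n+1$ possessing a Bernstein basis $p_{n,0},\dots,p_{n,n}$ for $\{a,b\}$ that is locally non-negative at $\{a,b\}$. Let $f_0\in U_n$ be strictly positive and assume that $D_{f_0}U_n$ possesses a Bernstein basis $q_{n-1,0},\dots,q_{n-1,n-1}$ for $\{a,b\}$ that is locally non-negative at $\{a,b\}$. Then the coefficients $\beta_0,\dots,\beta_n$ in the expansion $f_0=\sum_{k=0}^n\beta_kp_{n,k}$ are all positive.
   Context: A function $f\in C^m([a,b],\mathbb{K})$ has a zero of order $k$ at $c$ if $f(c)=\dots=f^{(k-1)}(c)=0$ and $f^{(k)}(c)\ne0$ (one-sided derivatives at endpoints). For an $(m+1)$-dimensional space $V\subset C^m([a,b],\mathbb{K})$, a Bernstein basis for $\{a,b\}$ is a system $p_{m,0},\dots,p_{m,m}$ in $V$ such that each $p_{m,k}$ has a zero of order exactly $k$ at $a$ and of order exactly $m-k$ at $b$. It is locally non-negative at $\{a,b\}$ if its functions are real-valued and there is $\delta>0$ with $p_{m,k}(x)\ge0$ for all $k$ and all $x\in[a,a+\delta)\cup(b-\delta,b]$. For strictly positive (real-valued, $>0$ on $[a,b]$) $f_0\in U_n$, $D_{f_0}U_n:=\{\frac{d}{dx}(f/f_0):f\in U_n\}$. *)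

(* Defs.v *)
(* Functions on [a,b] are modelled as R -> C; only their values on [a,b]
   matter. The scalar field K is R (realK = true: functions real-valued,
   scalars real) or C (realK = false). *)
From Stdlib Require Import Reals.
From Coquelicot Require Import Coquelicot.
Open Scope R_scope.

Definition inI (a b x : R) : Prop := a <= x <= b.

Definition inK (realK : bool) (c : C) : Prop := realK = true -> Im c = 0.

Definition Kvalued (realK : bool) (a b : R) (f : R -> C) : Prop :=
  forall x, inI a b x -> inK realK (f x).

Definition eqon (a b : R) (f g : R -> C) : Prop :=
  forall x, inI a b x -> f x = g x.

(* l is the derivative of f at x relative to [a,b]
   (one-sided at the endpoints) *)
Definition is_deriv_on (a b : R) (f : R -> C) (x : R) (l : C) : Prop :=
  forall eps : R, 0 < eps -> exists delta : R, 0 < delta /\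
    forall y, inI a b y -> y <> x -> Rabs (y - x) < delta ->
      Cmod (Cminus (Cdiv (Cminus (f y) (f x)) (RtoC (y - x))) l) < eps.

Definition cont_on (a b : R) (g : R -> C) : Prop :=
  forall x, inI a b x -> forall eps : R, 0 < eps -> exists delta : R, 0 < delta /\
    forall y, inI a b y -> Rabs (y - x) < delta -> Cmod (Cminus (g y) (g x)) < eps.

Definition derivs_on (a b : R) (m : nat) (f : R -> C) (g : nat -> R -> C) : Prop :=
  eqon a b (g O) f /\
  forall j, (j < m)%nat -> forall x, inI a b x -> is_deriv_on a b (g j) x (g (S j) x).

Definition Cm (realK : bool) (a b : R) (m : nat) (f : R -> C) : Prop :=
  Kvalued realK a b f /\
  exists g, derivs_on a b m f g /\ cont_on a b (g m).

Definition zero_order (a b : R) (f : R -> C) (c : R) (k : nat) : Prop :=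
  exists g, derivs_on a b k f g /\
    (forall j, (j < k)%nat -> g j c = RtoC 0) /\ g k c <> RtoC 0.

Definition lincomb (n : nat) (c : nat -> C) (e : nat -> R -> C) (x : R) : C :=
  sum_n (fun k => Cmult (c k) (e k x)) n.

Definition subspace (realK : bool) (a b : R) (m : nat) (U : (R -> C) -> Prop) : Prop :=
  (forall f, U f -> Cm realK a b m f) /\
  U (fun _ => RtoC 0) /\
  (forall f g c, U f -> U g -> inK realK c -> U (fun x => Cplus (Cmult c (f x)) (g x))).

Definition has_dim_succ (realK : bool) (a b : R) (N : nat) (U : (R -> C) -> Prop) : Prop :=
  exists e : nat -> R -> C,
    (forall k, (k <= N)%nat -> U (e k)) /\
    (forall c : nat -> C, (forall k, (k <= N)%nat -> inK realK (c k)) ->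
       eqon a b (lincomb N c e) (fun _ => RtoC 0) ->
       forall k, (k <= N)%nat -> c k = RtoC 0) /\
    (forall f, U f -> exists c : nat -> C,
       (forall k, (k <= N)%nat -> inK realK (c k)) /\ eqon a b f (lincomb N c e)).

Definition bernstein_basis (realK : bool) (a b : R) (m : nat)
    (V : (R -> C) -> Prop) (p : nat -> R -> C) : Prop :=
  forall k, (k <= m)%nat ->
    V (p k) /\ Cm realK a b m (p k) /\
    zero_order a b (p k) a k /\ zero_order a b (p k) b (m - k).

Definition loc_nonneg (a b : R) (m : nat) (p : nat -> R -> C) : Prop :=
  (forall k, (k <= m)%nat -> forall x, inI a b x -> Im (p k x) = 0) /\
  exists delta : R, 0 < delta /\
    forall k, (k <= m)%nat -> forall x, inI a b x ->
      (x < a + delta \/ b - delta < x) -> 0 <= Re (p k x).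

Definition strictly_pos (a b : R) (f : R -> C) : Prop :=
  forall x, inI a b x -> Im (f x) = 0 /\ 0 < Re (f x).

Definition Dspace (a b : R) (f0 : R -> C) (U : (R -> C) -> Prop) (g : R -> C) : Prop :=
  exists f, U f /\ forall x, inI a b x ->
    is_deriv_on a b (fun y => Cdiv (f y) (f0 y)) x (g x).

(* Main.v *)
Require Import Defs.
From Stdlib Require Import Reals Lra Lia Psatz Classical Arith.
From Coquelicot Require Import Coquelicot.
Open Scope R_scope.

Lemma near_pt a b x d : a < b -> inI a b x -> 0 < d ->
  exists y, inI a b y /\ y <> x /\ Rabs (y - x) < d.
Proof.
  intros Hab [H1 H2] Hd.
  set (e := Rmin d (b - a) / 2).
  assert (He : 0 < e). { unfold e. assert (0 < Rmin d (b-a)) by (apply Rmin_glb_lt; lra). lra. }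
  assert (He1 : e < d). { unfold e. pose proof (Rmin_l d (b-a)). lra. }
  assert (He2 : e <= (b - a)/2). { unfold e. pose proof (Rmin_r d (b-a)). lra. }
  destruct (Rle_dec (x + e) b).
  - exists (x + e). unfold inI. split; [lra|]. split; [lra|].
    replace (x + e - x) with e by ring. rewrite Rabs_pos_eq; lra.
  - exists (x - e). unfold inI. split; [lra|]. split; [lra|].
    replace (x - e - x) with (- e) by ring. rewrite Rabs_Ropp, Rabs_pos_eq; lra.
Qed.

Lemma Cmod_sub_tri (u l1 l2 : C) :
  Cmod (Cminus l1 l2) <= Cmod (Cminus u l1) + Cmod (Cminus u l2).
Proof.
  replace (Cminus l1 l2) with (Cplus (Cminus u l2) (Copp (Cminus u l1))).
  - eapply Rle_trans; [apply Cmod_triangle|]. rewrite Cmod_opp. lra.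
  - unfold Cminus. ring.
Qed.

Lemma deriv_unique a b f x l1 l2 : a < b -> inI a b x ->
  is_deriv_on a b f x l1 -> is_deriv_on a b f x l2 -> l1 = l2.
Proof.
  intros Hab Hx D1 D2.
  destruct (Req_dec (Cmod (Cminus l1 l2)) 0) as [H0|H0].
  - apply Cmod_eq_0 in H0. replace l1 with (Cplus (Cminus l1 l2) l2)
      by (unfold Cminus; ring). rewrite H0. ring.
  - pose proof (Cmod_ge_0 (Cminus l1 l2)) as Hp.
    set (d := Cmod (Cminus l1 l2)) in *.
    destruct (D1 (d/2)) as [d1 [Hd1 E1]]; [lra|].
    destruct (D2 (d/2)) as [d2 [Hd2 E2]]; [lra|].
    destruct (near_pt a b x (Rmin d1 d2) Hab Hx) as [y [Hy [Hyx Hyd]]].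
    { apply Rmin_glb_lt; auto. }
    specialize (E1 y Hy Hyx (Rlt_le_trans _ _ _ Hyd (Rmin_l _ _))).
    specialize (E2 y Hy Hyx (Rlt_le_trans _ _ _ Hyd (Rmin_r _ _))).
    pose proof (Cmod_sub_tri (Cdiv (Cminus (f y) (f x)) (RtoC (y - x))) l1 l2).
    fold d in H. lra.
Qed.

Lemma deriv_ext a b f g x l : inI a b x -> eqon a b f g ->
  is_deriv_on a b f x l -> is_deriv_on a b g x l.
Proof.
  intros Hx E D eps He. destruct (D eps He) as [d [Hd H]].
  exists d. split; auto. intros y Hy Hyx Hyd.
  rewrite <- (E y Hy), <- (E x Hx). auto.
Qed.

Lemma Re_quot z w r : r <> 0 ->
  Re (Cdiv (Cminus z w) (RtoC r)) = (Re z - Re w) / r.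
Proof.
  intros Hr. destruct z as [z1 z2], w as [w1 w2].
  unfold Cdiv, Cminus, Cmult, Cinv, Cplus, Copp, RtoC, Re; simpl. field. auto.
Qed.

Lemma Im_quot z w r : r <> 0 ->
  Im (Cdiv (Cminus z w) (RtoC r)) = (Im z - Im w) / r.
Proof.
  intros Hr. destruct z as [z1 z2], w as [w1 w2].
  unfold Cdiv, Cminus, Cmult, Cinv, Cplus, Copp, RtoC, Im; simpl. field. auto.
Qed.

Lemma Re_minus u l : Re (Cminus u l) = Re u - Re l.
Proof. destruct u, l; simpl; ring. Qed.
Lemma Im_minus u l : Im (Cminus u l) = Im u - Im l.
Proof. destruct u, l; simpl; ring. Qed.

Lemma im_le_Cmod c : Rabs (Im c) <= Cmod c.
Proof.
  destruct c as [x y]. unfold Cmod, Im; simpl.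
  rewrite <- sqrt_Rsqr_abs. apply sqrt_le_1_alt. unfold Rsqr. nra.
Qed.

Lemma deriv_re a b f x l : is_deriv_on a b f x l ->
  forall eps, 0 < eps -> exists d, 0 < d /\ forall y, inI a b y -> y <> x ->
    Rabs (y - x) < d -> Rabs ((Re (f y) - Re (f x)) / (y - x) - Re l) < eps.
Proof.
  intros D eps He. destruct (D eps He) as [d [Hd H]]. exists d; split; auto.
  intros y Hy Hyx Hyd. specialize (H y Hy Hyx Hyd).
  rewrite <- Re_quot by lra. rewrite <- Re_minus.
  eapply Rle_lt_trans; [apply re_le_Cmod|]. auto.
Qed.

Lemma deriv_im a b f x l : is_deriv_on a b f x l ->
  forall eps, 0 < eps -> exists d, 0 < d /\ forall y, inI a b y -> y <> x ->
    Rabs (y - x) < d -> Rabs ((Im (f y) - Im (f x)) / (y - x) - Im l) < eps.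
Proof.
  intros D eps He. destruct (D eps He) as [d [Hd H]]. exists d; split; auto.
  intros y Hy Hyx Hyd. specialize (H y Hy Hyx Hyd).
  rewrite <- Im_quot by lra. rewrite <- Im_minus.
  eapply Rle_lt_trans; [apply im_le_Cmod|]. auto.
Qed.

Lemma deriv_real a b f x l : a < b -> inI a b x ->
  (forall y, inI a b y -> Im (f y) = 0) ->
  is_deriv_on a b f x l -> Im l = 0.
Proof.
  intros Hab Hx Hr D.
  destruct (Req_dec (Im l) 0) as [|Hn]; auto.
  assert (Hp : 0 < Rabs (Im l)) by (apply Rabs_pos_lt; auto).
  destruct (deriv_im a b f x l D (Rabs (Im l)) Hp) as [d [Hd H]].
  destruct (near_pt a b x d Hab Hx Hd) as [y [Hy [Hyx Hyd]]].
  specialize (H y Hy Hyx Hyd). rewrite (Hr y Hy), (Hr x Hx) in H.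
  replace ((0 - 0) / (y - x) - Im l) with (- Im l) in H by (field; lra).
  rewrite Rabs_Ropp in H. lra.
Qed.


Lemma toA {T} (F : (T -> Prop) -> Prop) (h : T -> C) (l : C) :
  filterlim h F (@locally C_UniformSpace l) -> filterlim h F (@locally (AbsRing_UniformSpace C_AbsRing) l).
Proof. intros H P HP. apply H. apply locally_C. exact HP. Qed.
Lemma fromA {T} (F : (T -> Prop) -> Prop) (h : T -> C) (l : C) :
  filterlim h F (@locally (AbsRing_UniformSpace C_AbsRing) l) -> filterlim h F (@locally C_UniformSpace l).
Proof. intros H P HP. apply H. apply locally_C. exact HP. Qed.

Lemma lim_iff {T} (F : (T -> Prop) -> Prop) {FF : Filter F} (h : T -> C) (l : C) :
  filterlim h F (@locally C_UniformSpace l) <->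
  (forall eps, 0 < eps -> F (fun y => Cmod (Cminus (h y) l) < eps)).
Proof.
  split.
  - intros H eps He. apply toA in H.
    pose proof (proj1 (filterlim_locally (U:=AbsRing_UniformSpace C_AbsRing) _ _) H (mkposreal eps He)) as H'.
    eapply filter_imp; [|exact H']. intros y Hy. simpl in Hy.
    exact Hy.
  - intros H. apply filterlim_locally. intros eps.
    eapply filter_imp; [|exact (H eps (cond_pos eps))].
    intros y Hy. apply C_NormedModule_mixin_compat1. exact Hy.
Qed.

Definition Fw (a b x : R) := within (fun y => inI a b y /\ y <> x) (locally x).
Global Instance Fw_filter a b x : Filter (Fw a b x).
Proof. unfold Fw. apply within_filter. apply locally_filter. Qed.

Definition DQ (f : R -> C) (x y : R) : C := Cdiv (Cminus (f y) (f x)) (RtoC (y - x)).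

Lemma RtoC_neq0 r : r <> 0 -> RtoC r <> RtoC 0.
Proof. intros H E. apply H. apply (f_equal Re) in E. simpl in E. exact E. Qed.

Lemma deriv_iff a b f x l :
  is_deriv_on a b f x l <-> filterlim (DQ f x) (Fw a b x) (locally l).
Proof.
  rewrite lim_iff. split.
  - intros D eps He. destruct (D eps He) as [d [Hd H]].
    exists (mkposreal d Hd). intros y Hy [H1 H2].
    change (Rabs (y - x) < d) in Hy. apply H; auto.
  - intros H eps He. destruct (H eps He) as [d Hd].
    exists d. split; [apply cond_pos|]. intros y Hy Hyx Hyd.
    apply Hd; auto.
  - apply Fw_filter.
Qed.

Lemma lim_mult {T} (F : (T -> Prop) -> Prop) {FF : Filter F} (f g : T -> C) lf lg :
  filterlim f F (locally lf) -> filterlim g F (locally lg) ->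
  filterlim (fun y => Cmult (f y) (g y)) F (locally (Cmult lf lg)).
Proof.
  intros H1 H2. apply fromA. apply toA in H1. apply toA in H2.
  apply (filterlim_comp_2 f g (fun u v => @mult C_AbsRing u v) H1 H2).
  apply (filterlim_mult (K:=C_AbsRing) lf lg).
Qed.

Lemma lim_plus {T} (F : (T -> Prop) -> Prop) {FF : Filter F} (f g : T -> C) lf lg :
  filterlim f F (locally lf) -> filterlim g F (locally lg) ->
  filterlim (fun y => Cplus (f y) (g y)) F (locally (Cplus lf lg)).
Proof.
  intros H1 H2. apply fromA. apply toA in H1. apply toA in H2.
  apply (filterlim_comp_2 f g (fun u v => @plus (AbsRing_NormedModule C_AbsRing) u v) H1 H2).
  apply (filterlim_plus (V:=AbsRing_NormedModule C_AbsRing) lf lg).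
Qed.

Lemma lim_inv {T} (F : (T -> Prop) -> Prop) {FF : Filter F} (h : T -> C) w :
  w <> RtoC 0 -> filterlim h F (locally w) ->
  filterlim (fun y => Cinv (h y)) F (locally (Cinv w)).
Proof.
  intros Hw H. rewrite lim_iff in H |- *. intros eps He.
  assert (Hm : 0 < Cmod w) by (apply Cmod_gt_0; auto).
  set (r := Rmin (Cmod w / 2) (eps * (Cmod w * Cmod w) / 2)).
  assert (Hr : 0 < r). { unfold r. apply Rmin_glb_lt; [lra|].
    apply Rmult_lt_0_compat; [apply Rmult_lt_0_compat; nra|lra]. }
  eapply filter_imp; [|exact (H r Hr)]. intros y Hy. simpl in Hy.
  pose proof (Rmin_l (Cmod w / 2) (eps * (Cmod w * Cmod w) / 2)) as R1.
  pose proof (Rmin_r (Cmod w / 2) (eps * (Cmod w * Cmod w) / 2)) as R2.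
  fold r in R1, R2.
  assert (Hhy : Cmod w / 2 < Cmod (h y)).
  { pose proof (Cmod_sub_tri (h y) w (RtoC 0)).
    replace (Cminus w (RtoC 0)) with w in H0 by (unfold Cminus; ring).
    replace (Cminus (h y) (RtoC 0)) with (h y) in H0 by (unfold Cminus; ring).
    lra. }
  assert (Hh0 : h y <> RtoC 0). { apply Cmod_gt_0. lra. }
  replace (Cminus (Cinv (h y)) (Cinv w)) with
    (Cmult (Copp (Cminus (h y) w)) (Cinv (Cmult (h y) w))) by (unfold Cminus; field; auto).
  rewrite Cmod_mult, Cmod_opp, Cmod_inv, Cmod_mult.
  2:{ intro E. apply (f_equal Cmod) in E. rewrite Cmod_mult in E.
       replace (Cmod (RtoC 0)) with 0 in E by (symmetry; apply Cmod_0). nra. }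
  apply (Rmult_lt_reg_r (Cmod (h y) * Cmod w)); [nra|].
  rewrite Rmult_assoc, Rinv_l by nra. rewrite Rmult_1_r.
  assert (eps * (Cmod w * Cmod w) / 2 <= eps * (Cmod (h y) * Cmod w)).
  { assert (Cmod w * Cmod w / 2 <= Cmod (h y) * Cmod w) by nra. nra. }
  lra.
  all: exact FF.
Qed.

Lemma cont_of_deriv a b f x l : is_deriv_on a b f x l ->
  filterlim f (Fw a b x) (locally (f x)).
Proof.
  intros D. rewrite lim_iff. intros eps He.
  destruct (D 1 Rlt_0_1) as [d [Hd H]].
  pose proof (Cmod_ge_0 l) as Hl.
  set (d' := Rmin d (eps / (Cmod l + 1))).
  assert (Hd' : 0 < d'). { unfold d'. apply Rmin_glb_lt; auto.
    apply Rdiv_lt_0_compat; lra. }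
  exists (mkposreal d' Hd'). intros y Hy [H1 H2].
  change (Rabs (y - x) < d') in Hy.
  pose proof (Rmin_l d (eps / (Cmod l + 1))) as R1.
  pose proof (Rmin_r d (eps / (Cmod l + 1))) as R2. fold d' in R1, R2.
  specialize (H y H1 H2 ltac:(lra)).
  assert (Hyx : y - x <> 0) by lra.
  replace (Cminus (f y) (f x)) with
    (Cmult (Cdiv (Cminus (f y) (f x)) (RtoC (y - x))) (RtoC (y - x)))
    by (field; apply RtoC_neq0; auto).
  rewrite Cmod_mult, Cmod_R.
  set (q := Cdiv (Cminus (f y) (f x)) (RtoC (y - x))) in *.
  assert (Cmod q < Cmod l + 1).
  { pose proof (Cmod_triangle (Cminus q l) l).
    replace (Cplus (Cminus q l) l) with q in H0 by (unfold Cminus; ring). lra. }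
  assert (Rabs (y - x) * (Cmod l + 1) < eps).
  { apply (Rmult_lt_compat_r (Cmod l + 1)) in Hy; [|lra].
    unfold Rdiv in R2. 
    assert (d' * (Cmod l + 1) <= eps).
    { apply (Rmult_le_compat_r (Cmod l + 1)) in R2; [|lra].
      rewrite Rmult_assoc, Rinv_l in R2 by lra. lra. }
    lra. }
  pose proof (Cmod_ge_0 q). pose proof (Rabs_pos (y - x)). nra.
  all: apply Fw_filter.
Qed.

Lemma deriv_const a b (c : C) x : is_deriv_on a b (fun _ => c) x (RtoC 0).
Proof.
  intros eps He. exists 1. split; [lra|]. intros y Hy Hyx Hyd.
  replace (Cminus (Cdiv (Cminus c c) (RtoC (y - x))) (RtoC 0)) with (RtoC 0).
  - rewrite Cmod_0. auto.
  - unfold Cminus, Cdiv. field. apply RtoC_neq0. lra.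
Qed.

Lemma deriv_plus a b f g x lf lg : is_deriv_on a b f x lf -> is_deriv_on a b g x lg ->
  is_deriv_on a b (fun y => Cplus (f y) (g y)) x (Cplus lf lg).
Proof.
  rewrite !deriv_iff. intros H1 H2. unfold Fw in *.
  eapply filterlim_within_ext.
  2: apply (lim_plus _ _ _ _ _ H1 H2).
  intros y [Hy Hyx]. unfold DQ, Cminus, Cdiv. field. apply RtoC_neq0. lra.
Qed.

Lemma deriv_scal a b f (c : C) x lf : is_deriv_on a b f x lf ->
  is_deriv_on a b (fun y => Cmult c (f y)) x (Cmult c lf).
Proof.
  rewrite !deriv_iff. intros H1. unfold Fw in *.
  eapply filterlim_within_ext.
  2: apply (lim_mult _ _ _ _ _ (filterlim_const c) H1).
  intros y [Hy Hyx]. unfold DQ, Cminus, Cdiv. field. apply RtoC_neq0. lra.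
Qed.

Lemma deriv_mult a b f g x lf lg : is_deriv_on a b f x lf -> is_deriv_on a b g x lg ->
  is_deriv_on a b (fun y => Cmult (f y) (g y)) x
     (Cplus (Cmult lf (g x)) (Cmult (f x) lg)).
Proof.
  intros D1 D2. pose proof (cont_of_deriv _ _ _ _ _ D2) as Cg.
  revert D1 D2. rewrite !deriv_iff. intros H1 H2. unfold Fw in *.
  eapply filterlim_within_ext.
  2: apply (lim_plus _ _ _ _ _ (lim_mult _ _ _ _ _ H1 Cg)
              (lim_mult _ _ _ _ _ (filterlim_const (f x)) H2)).
  intros y [Hy Hyx]. unfold DQ, Cminus, Cdiv. field. apply RtoC_neq0. lra.
Qed.

Lemma deriv_inv a b f x l : inI a b x -> (forall y, inI a b y -> f y <> RtoC 0) ->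
  is_deriv_on a b f x l ->
  is_deriv_on a b (fun y => Cinv (f y)) x
     (Cmult (RtoC (-1)) (Cmult l (Cmult (Cinv (f x)) (Cinv (f x))))).
Proof.
  intros Hx Hnz D1. pose proof (cont_of_deriv _ _ _ _ _ D1) as Cf.
  pose proof (lim_inv _ _ _ (Hnz x Hx) Cf) as Ci.
  revert D1. rewrite !deriv_iff. intros H1. unfold Fw in *.
  eapply filterlim_within_ext.
  2: apply (lim_mult _ _ _ _ _ (filterlim_const (RtoC (-1)))
             (lim_mult _ _ _ _ _ H1 (lim_mult _ _ _ _ _ Ci (filterlim_const (Cinv (f x)))))).
  intros y [Hy Hyx]. pose proof (Hnz y Hy). pose proof (Hnz x Hx).
  unfold DQ, Cminus, Cdiv. field. repeat split; auto. apply RtoC_neq0. lra.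
Qed.


Lemma derivs_weaken a b m m' f G : derivs_on a b m f G -> (m' <= m)%nat -> derivs_on a b m' f G.
Proof. intros [H0 H1] Hm. split; auto. intros j Hj. apply H1. lia. Qed.

Lemma derivs_shift a b m f G : derivs_on a b (S m) f G ->
  derivs_on a b m (G 1%nat) (fun j => G (S j)).
Proof. intros [H0 H1]. split. { intros x Hx. reflexivity. } intros j Hj. apply H1. lia. Qed.

Lemma derivs_eqon a b m f g G : eqon a b f g -> derivs_on a b m f G -> derivs_on a b m g G.
Proof. intros E [H0 H1]. split; auto. intros x Hx. rewrite H0, E; auto. Qed.

Lemma derivs_ext_seq a b m f G1 G2 :
  (forall i, (i <= m)%nat -> forall x, inI a b x -> G1 i x = G2 i x) ->
  derivs_on a b m f G1 -> derivs_on a b m f G2.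
Proof.
  intros E [H0 H1]. split.
  - intros x Hx. rewrite <- E; auto. lia.
  - intros j Hj x Hx. rewrite <- (E (S j)) by (auto; lia).
    apply deriv_ext with (G1 j); auto.
    + intros y Hy. apply E; auto. lia.
Qed.

Lemma derivs_first a b m f G x : derivs_on a b (S m) f G -> inI a b x ->
  is_deriv_on a b f x (G 1%nat x).
Proof.
  intros [H0 H1] Hx. apply deriv_ext with (G 0%nat); auto. apply H1; auto. lia.
Qed.

Definition consf (f : R -> C) (G : nat -> R -> C) : nat -> R -> C :=
  fun j => match j with O => f | S j' => G j' end.

Lemma derivs_unshift a b m f g G : (forall x, inI a b x -> is_deriv_on a b f x (g x)) ->
  derivs_on a b m g G -> derivs_on a b (S m) f (consf f G).
Proof.
  intros D [H0 H1]. split. { intros x Hx. reflexivity. }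
  intros j Hj x Hx. destruct j as [|j]; simpl.
  - rewrite H0; auto.
  - apply H1; auto. lia.
Qed.

Lemma derivs_unique a b m f G1 G2 : a < b -> derivs_on a b m f G1 -> derivs_on a b m f G2 ->
  forall i, (i <= m)%nat -> forall x, inI a b x -> G1 i x = G2 i x.
Proof.
  intros Hab [A0 A1] [B0 B1] i. induction i as [|i IH]; intros Hi x Hx.
  - rewrite A0, B0; auto.
  - apply (deriv_unique a b (G1 i) x (G1 (S i) x) (G2 (S i) x) Hab Hx).
    + apply A1; auto.
    + apply deriv_ext with (G2 i); auto.
      * intros y Hy. symmetry. apply IH; auto. lia.
Qed.

Lemma derivs_plus a b m f g F G : derivs_on a b m f F -> derivs_on a b m g G ->
  derivs_on a b m (fun x => Cplus (f x) (g x)) (fun j x => Cplus (F j x) (G j x)).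
Proof.
  intros [A0 A1] [B0 B1]. split.
  - intros x Hx. rewrite A0, B0; auto.
  - intros j Hj x Hx. apply deriv_plus; auto.
Qed.

Lemma derivs_scal a b m f F (c : C) : derivs_on a b m f F ->
  derivs_on a b m (fun x => Cmult c (f x)) (fun j x => Cmult c (F j x)).
Proof.
  intros [A0 A1]. split.
  - intros x Hx. rewrite A0; auto.
  - intros j Hj x Hx. apply deriv_scal; auto.
Qed.

Definition constseq (c : C) : nat -> R -> C :=
  fun j => match j with O => fun _ => c | S _ => fun _ => RtoC 0 end.

Lemma derivs_const a b m (c : C) : derivs_on a b m (fun _ => c) (constseq c).
Proof.
  split. { intros x Hx. reflexivity. }
  intros j Hj x Hx. destruct j; simpl; apply deriv_const.
Qed.

Lemma derivs_lincomb a b m N (c : nat -> C) (f F : nat -> _) :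
  (forall j, (j <= N)%nat -> derivs_on a b m (f j) (F j)) ->
  derivs_on a b m (lincomb N c f) (fun i => lincomb N c (fun j => F j i)).
Proof.
  induction N as [|N IH]; intros H.
  - unfold lincomb. eapply derivs_ext_seq.
    2: eapply derivs_eqon; [|apply (derivs_scal _ _ _ _ _ (c O) (H O (le_n _)))].
    + intros i Hi x Hx. rewrite sum_O. reflexivity.
    + intros x Hx. rewrite sum_O. reflexivity.
  - unfold lincomb in *. eapply derivs_ext_seq.
    2: eapply derivs_eqon; [|apply (derivs_plus _ _ _ _ _ _ _
          (IH (fun j Hj => H j ltac:(lia))) (derivs_scal _ _ _ _ _ (c (S N)) (H (S N) (le_n _))))].
    + intros i Hi x Hx. rewrite sum_Sn. reflexivity.
    + intros x Hx. rewrite sum_Sn. reflexivity.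
Qed.


Lemma prod_ex a b m : forall u v U V, derivs_on a b m u U -> derivs_on a b m v V ->
  exists W, derivs_on a b m (fun x => Cmult (u x) (v x)) W.
Proof.
  induction m as [|m IH]; intros u v U V HU HV.
  - exists (fun _ x => Cmult (u x) (v x)). split.
    + intros x Hx. reflexivity.
    + intros j Hj. lia.
  - destruct (IH (U 1%nat) v (fun j => U (S j)) V (derivs_shift _ _ _ _ _ HU)
                 (derivs_weaken _ _ _ m _ _ HV ltac:(lia))) as [W1 H1].
    destruct (IH u (V 1%nat) U (fun j => V (S j)) (derivs_weaken _ _ _ m _ _ HU ltac:(lia))
                 (derivs_shift _ _ _ _ _ HV)) as [W2 H2].
    pose proof (derivs_plus _ _ _ _ _ _ _ H1 H2) as H3.
    eexists. eapply derivs_unshift; [|exact H3].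
    intros x Hx. apply deriv_mult.
    + eapply derivs_first; eauto.
    + eapply derivs_first; eauto.
Qed.

Lemma inv_ex a b n f0 F : derivs_on a b n f0 F ->
  (forall y, inI a b y -> f0 y <> RtoC 0) ->
  forall m, (m <= n)%nat -> exists R, derivs_on a b m (fun x => Cinv (f0 x)) R.
Proof.
  intros HF Hnz m. induction m as [|m IH]; intros Hm.
  - exists (fun _ x => Cinv (f0 x)). split.
    + intros x Hx. reflexivity.
    + intros j Hj. lia.
  - destruct IH as [R HR]; [lia|].
    destruct n as [|n]; [lia|].
    pose proof (derivs_weaken _ _ _ _ _ _ (derivs_shift _ _ _ _ _ HF) (le_S_n _ _ Hm)) as HF1.
    destruct (prod_ex _ _ _ _ _ _ _ HR HR) as [W HW].
    destruct (prod_ex _ _ _ _ _ _ _ HF1 HW) as [W2 HW2].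
    pose proof (derivs_scal _ _ _ _ _ (RtoC (-1)) HW2) as H3.
    eexists. eapply derivs_unshift; [|exact H3].
    intros x Hx. apply deriv_inv; auto.
    eapply derivs_first; eauto.
Qed.

Lemma prod_zero a b c : a < b -> inI a b c ->
  forall k m u v U V W, (k <= m)%nat ->
  derivs_on a b m u U -> derivs_on a b m v V ->
  derivs_on a b m (fun x => Cmult (u x) (v x)) W ->
  (forall i, (i < k)%nat -> U i c = RtoC 0) ->
  (forall i, (i < k)%nat -> W i c = RtoC 0) /\ W k c = Cmult (U k c) (v c).
Proof.
  intros Hab Hc k. induction k as [|k IH]; intros m u v U V W Hk HU HV HW HZ.
  - split; [intros; lia|].
    destruct HW as [W0 _]. destruct HU as [U0 _]. rewrite W0, U0; auto.
  - destruct m as [|m]; [lia|].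
    destruct (prod_ex _ _ _ _ _ _ _ (derivs_shift _ _ _ _ _ HU)
                 (derivs_weaken _ _ _ m _ _ HV ltac:(lia))) as [X HX].
    destruct (prod_ex _ _ _ _ _ _ _ (derivs_weaken _ _ _ m _ _ HU ltac:(lia))
                 (derivs_shift _ _ _ _ _ HV)) as [Y HY].
    pose proof (derivs_plus _ _ _ _ _ _ _ HX HY) as HXY.
    assert (E1 : eqon a b (W 1%nat) (fun x => Cplus (Cmult (U 1%nat x) (v x)) (Cmult (u x) (V 1%nat x)))).
    { intros x Hx. apply (deriv_unique a b (fun x => Cmult (u x) (v x)) x); auto.
      - eapply derivs_first; eauto.
      - apply deriv_mult; eapply derivs_first; eauto. }
    pose proof (derivs_eqon _ _ _ _ _ _ E1 (derivs_shift _ _ _ _ _ HW)) as HW1.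
    pose proof (derivs_unique _ _ _ _ _ _ Hab HW1 HXY) as EW.
    destruct (IH m (U 1%nat) v (fun j => U (S j)) V X ltac:(lia)
               (derivs_shift _ _ _ _ _ HU) (derivs_weaken _ _ _ m _ _ HV ltac:(lia)) HX)
      as [X0 X1]. { intros i Hi. apply HZ. lia. }
    destruct (IH m u (V 1%nat) U (fun j => V (S j)) Y ltac:(lia)
               (derivs_weaken _ _ _ m _ _ HU ltac:(lia)) (derivs_shift _ _ _ _ _ HV) HY)
      as [Y0 Y1]. { intros i Hi. apply HZ. lia. }
    split.
    + intros i Hi. destruct i as [|i].
      * destruct HW as [W0 _]. destruct HU as [U0 _]. rewrite W0 by auto.
        rewrite <- U0 by auto. rewrite HZ by lia. ring.
      * rewrite EW by (auto; lia). simpl. rewrite X0, Y0 by lia. ring.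
    + rewrite EW by (auto; lia). simpl. rewrite X1, Y1. rewrite (HZ k) by lia. ring.
Qed.


Definition RD_right (h : R -> R) (c l : R) : Prop :=
  forall eps, 0 < eps -> exists d, 0 < d /\ forall x, c < x < c + d ->
    Rabs ((h x - h c) / (x - c) - l) < eps.
Definition RD_left (h : R -> R) (c l : R) : Prop :=
  forall eps, 0 < eps -> exists d, 0 < d /\ forall x, c - d < x < c ->
    Rabs ((h x - h c) / (x - c) - l) < eps.

Lemma rd_small h c L : RD_right h c L -> h c = 0 ->
  forall eta, 0 < eta -> forall x, c < x -> exists y, c < y < x /\ h y < eta.
Proof.
  intros D H0 eta He x Hx.
  destruct (D 1 Rlt_0_1) as [d [Hd H]].
  pose proof (Rabs_pos L) as HL.
  set (m := Rmin (Rmin d (x - c)) (eta / (Rabs L + 1))).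
  assert (Hm : 0 < m). { unfold m. repeat apply Rmin_glb_lt; try lra.
    apply Rdiv_lt_0_compat; lra. }
  pose proof (Rmin_l (Rmin d (x - c)) (eta / (Rabs L + 1))) as M1.
  pose proof (Rmin_r (Rmin d (x - c)) (eta / (Rabs L + 1))) as M2.
  pose proof (Rmin_l d (x - c)). pose proof (Rmin_r d (x - c)).
  fold m in M1, M2.
  exists (c + m / 2). split; [lra|].
  specialize (H (c + m/2) ltac:(lra)). rewrite H0 in H.
  replace (c + m / 2 - c) with (m/2) in H by ring.
  assert (Hq : (h (c + m / 2) - 0) / (m / 2) < Rabs L + 1).
  { apply Rabs_def2 in H. destruct H. pose proof (Rle_abs L). lra. }
  apply (Rmult_lt_compat_r (m/2)) in Hq; [|lra].
  unfold Rdiv in Hq. rewrite Rmult_assoc, Rinv_l in Hq by lra.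
  assert (m * (Rabs L + 1) <= eta).
  { apply (Rmult_le_compat_r (Rabs L + 1)) in M2; [|lra].
    unfold Rdiv in M2. rewrite Rmult_assoc, Rinv_l in M2 by lra. lra. }
  nra.
Qed.

Lemma step_neg (h h' : R -> R) c d e L : 0 < e -> c + e <= d -> h c = 0 ->
  RD_right h c L ->
  (forall x, c < x < d -> derivable_pt_lim h x (h' x)) ->
  (forall x, c < x < c + e -> h' x < 0) ->
  forall x, c < x < c + e -> h x < 0.
Proof.
  intros He Hed H0 D Dh Hneg.
  assert (Mono : forall x y, c < y < x -> x < c + e -> h x < h y).
  { intros x y Hy Hx.
    destruct (MVT_cor2 h h' y x ltac:(lra)) as [z [Ez Hz]].
    { intros z Hz. apply Dh. lra. }
    assert (h' z < 0) by (apply Hneg; lra). nra. }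
  assert (Le : forall x, c < x < c + e -> h x <= 0).
  { intros x Hx. destruct (Rle_dec (h x) 0) as [|Hn]; auto.
    destruct (rd_small h c L D H0 (h x) ltac:(lra) x ltac:(lra)) as [y [Hy Hhy]].
    pose proof (Mono x y ltac:(lra) ltac:(lra)). lra. }
  intros x Hx. pose proof (Mono x ((c + x)/2) ltac:(lra) ltac:(lra)).
  pose proof (Le ((c+x)/2) ltac:(lra)). lra.
Qed.

Lemma core_right k' (H : nat -> R -> R) c d : c < d ->
  (forall j, (j <= k')%nat -> H j c = 0) ->
  (forall j, (j <= k')%nat -> RD_right (H j) c (H (S j) c)) ->
  (forall j, (j <= k')%nat -> forall x, c < x < d -> derivable_pt_lim (H j) x (H (S j) x)) ->
  H (S k') c < 0 ->
  exists e, 0 < e /\ c + e <= d /\ forall x, c < x < c + e -> H O x < 0.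
Proof.
  intros Hcd HZ HR HD Hneg.
  assert (G : forall i, (i <= k')%nat -> exists e, 0 < e /\ c + e <= d /\
             forall x, c < x < c + e -> H (k' - i)%nat x < 0).
  { induction i as [|i IH]; intros Hi.
    - destruct (HR k' (le_n _) (- H (S k') c) ltac:(lra)) as [dl [Hdl Hq]].
      exists (Rmin dl (d - c)). pose proof (Rmin_l dl (d-c)). pose proof (Rmin_r dl (d-c)).
      split; [apply Rmin_glb_lt; lra|]. split; [lra|].
      intros x Hx. replace (k' - 0)%nat with k' by lia.
      specialize (Hq x ltac:(lra)). rewrite (HZ k' (le_n _)) in Hq.
      apply Rabs_def2 in Hq. destruct Hq as [Hq _].
      assert (Hq' : (H k' x - 0) / (x - c) < 0) by lra.
      assert (0 < x - c) by lra.
      apply (Rmult_lt_compat_r (x - c)) in Hq'; auto.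
      unfold Rdiv in Hq'. rewrite Rmult_assoc, Rinv_l in Hq' by lra. lra.
    - destruct (IH ltac:(lia)) as [e [He [Hed Hx]]].
      exists e. split; auto. split; auto.
      apply (step_neg (H (k' - S i)%nat) (H (k' - i)%nat) c d e (H (S (k' - S i)) c)); auto.
      + apply HZ. lia.
      + apply HR. lia.
      + intros x Hx'. replace (k' - i)%nat with (S (k' - S i)) by lia. apply HD; auto. lia. }
  destruct (G k' (le_n _)) as [e He]. exists e. replace (k' - k')%nat with O in He by lia.
  exact He.
Qed.

Lemma deriv_refl f s x l : derivable_pt_lim f (s - x) l ->
  derivable_pt_lim (fun y => f (s - y)) x (- l).
Proof.
  intros D eps He. destruct (D eps He) as [d Hd]. exists d.
  intros h Hh Hhd. specialize (Hd (- h) ltac:(lra) ltac:(rewrite Rabs_Ropp; lra)).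
  replace (s - (x + h)) with (s - x + - h) by ring.
  replace ((f (s - x + - h) - f (s - x)) / h - - l) with
    (- ((f (s - x + - h) - f (s - x)) / - h - l)) by (field; auto).
  rewrite Rabs_Ropp. auto.
Qed.

Lemma core_left k' (H : nat -> R -> R) c d : c < d ->
  (forall j, (j <= k')%nat -> H j d = 0) ->
  (forall j, (j <= k')%nat -> RD_left (H j) d (H (S j) d)) ->
  (forall j, (j <= k')%nat -> forall x, c < x < d -> derivable_pt_lim (H j) x (H (S j) x)) ->
  (-1) ^ (S k') * H (S k') d < 0 ->
  exists e, 0 < e /\ c <= d - e /\ forall x, d - e < x < d -> H O x < 0.
Proof.
  intros Hcd HZ HR HD Hneg.
  set (H' := fun j x => (-1) ^ j * H j (c + d - x)).
  destruct (core_right k' H' c d Hcd) as [e [He [Hed HH]]].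
  - intros j Hj. unfold H'. replace (c + d - c) with d by ring. rewrite HZ; auto. ring.
  - intros j Hj eps Heps. destruct (HR j Hj eps Heps) as [dl [Hdl Hq]].
    exists dl. split; auto. intros x Hx. unfold H'.
    replace (c + d - c) with d by ring.
    specialize (Hq (c + d - x) ltac:(lra)).
    replace ((-1) ^ j * H j (c + d - x) - (-1) ^ j * H j d) with
      ((-1) ^ j * (H j (c + d - x) - H j d)) by ring.
    replace ((-1) ^ j * (H j (c + d - x) - H j d) / (x - c) - (-1) ^ S j * H (S j) d)
      with ((-1) ^ S j * ((H j (c + d - x) - H j d) / (c + d - x - d) - H (S j) d)).
    2:{ simpl. field. lra. }
    rewrite Rabs_mult, pow_1_abs. lra.
  - intros j Hj x Hx. unfold H'.
    replace ((-1) ^ S j * H (S j) (c + d - x)) with ((-1) ^ j * (- H (S j) (c + d - x)))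
      by (simpl; ring).
    apply (derivable_pt_lim_scal (fun y => H j (c + d - y))).
    apply deriv_refl. apply HD; auto. lra.
  - unfold H'. replace (c + d - c) with d by ring. auto.
  - exists e. split; auto. split; [lra|]. intros x Hx.
    specialize (HH (c + d - x) ltac:(lra)). unfold H' in HH. simpl in HH.
    replace (c + d - (c + d - x)) with x in HH by ring. lra.
Qed.


Lemma C_eq0 z : Re z = 0 -> Im z = 0 -> z = RtoC 0.
Proof. destruct z as [x y]. simpl. intros -> ->. reflexivity. Qed.

Lemma derivs_real a b m g G : a < b -> derivs_on a b m g G ->
  (forall x, inI a b x -> Im (g x) = 0) ->
  forall j, (j <= m)%nat -> forall x, inI a b x -> Im (G j x) = 0.
Proof.
  intros Hab [H0 H1] Hg j. induction j as [|j IH]; intros Hj x Hx.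
  - rewrite H0; auto.
  - apply (deriv_real a b (G j) x); auto.
    all: try (intros y Hy; apply IH; auto; lia).
Qed.

Lemma to_RD_right a b f l : a < b -> is_deriv_on a b f a l ->
  RD_right (fun x => Re (f x)) a (Re l).
Proof.
  intros Hab D eps He. destruct (deriv_re a b f a l D eps He) as [d [Hd H]].
  exists (Rmin d (b - a)). pose proof (Rmin_l d (b-a)). pose proof (Rmin_r d (b-a)).
  split; [apply Rmin_glb_lt; lra|]. intros x Hx. apply H.
  - unfold inI. lra.
  - lra.
  - rewrite Rabs_pos_eq; lra.
Qed.

Lemma to_RD_left a b f l : a < b -> is_deriv_on a b f b l ->
  RD_left (fun x => Re (f x)) b (Re l).
Proof.
  intros Hab D eps He. destruct (deriv_re a b f b l D eps He) as [d [Hd H]].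
  exists (Rmin d (b - a)). pose proof (Rmin_l d (b-a)). pose proof (Rmin_r d (b-a)).
  split; [apply Rmin_glb_lt; lra|]. intros x Hx. apply H.
  - unfold inI. lra.
  - lra.
  - rewrite Rabs_left; lra.
Qed.

Lemma to_dpl a b f x l : a < x < b -> is_deriv_on a b f x l ->
  derivable_pt_lim (fun y => Re (f y)) x (Re l).
Proof.
  intros Hx D eps He. destruct (deriv_re a b f x l D eps He) as [d [Hd H]].
  set (m := Rmin d (Rmin (x - a) (b - x))).
  assert (Hm : 0 < m) by (unfold m; repeat apply Rmin_glb_lt; lra).
  pose proof (Rmin_l d (Rmin (x - a) (b - x))) as P1. pose proof (Rmin_r d (Rmin (x - a) (b - x))) as P2.
  pose proof (Rmin_l (x - a) (b - x)). pose proof (Rmin_r (x - a) (b - x)). fold m in P1, P2.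
  exists (mkposreal m Hm). intros h Hh Hhm. simpl in Hhm.
  specialize (H (x + h)). replace (x + h - x) with h in H by ring.
  apply H.
  - unfold inI. apply Rabs_def2 in Hhm. lra.
  - lra.
  - lra.
Qed.

Lemma sign_a a b m g G k : a < b -> derivs_on a b m g G ->
  (forall x, inI a b x -> Im (g x) = 0) -> (k <= m)%nat ->
  (forall j, (j < k)%nat -> G j a = RtoC 0) -> G k a <> RtoC 0 ->
  (exists d, 0 < d /\ forall x, inI a b x -> x < a + d -> 0 <= Re (g x)) ->
  0 < Re (G k a).
Proof.
  intros Hab HG Hg Hk HZ HN [d [Hd Hpos]].
  assert (Ha : inI a b a) by (unfold inI; lra).
  pose proof (derivs_real a b m g G Hab HG Hg) as HR.
  assert (Hre : Re (G k a) <> 0).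
  { intro E. apply HN. apply C_eq0; auto. }
  destruct (Rlt_dec 0 (Re (G k a))) as [|Hn]; auto. exfalso.
  destruct k as [|k'].
  - destruct HG as [H0 _]. rewrite H0 in Hre, Hn by auto.
    pose proof (Hpos a Ha ltac:(lra)). lra.
  - destruct (core_right k' (fun j x => Re (G j x)) a b Hab) as [e [He [Heb Hx]]].
    + intros j Hj. simpl. rewrite HZ by lia. reflexivity.
    + intros j Hj. apply (to_RD_right a b); auto. destruct HG as [_ H1]. apply H1; [lia|auto].
    + intros j Hj x Hx. apply (to_dpl a b); auto. destruct HG as [_ H1].
      apply H1; [lia|]. unfold inI. lra.
    + simpl. lra.
    + set (x := a + Rmin e d / 2).
      assert (0 < Rmin e d) by (apply Rmin_glb_lt; lra).
      pose proof (Rmin_l e d). pose proof (Rmin_r e d).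
      specialize (Hx x ltac:(unfold x; lra)). simpl in Hx.
      destruct HG as [HG0 _]. rewrite HG0 in Hx by (unfold inI, x; lra).
      pose proof (Hpos x ltac:(unfold inI, x; lra) ltac:(unfold x; lra)). lra.
Qed.

Lemma sign_b a b m g G k : a < b -> derivs_on a b m g G ->
  (forall x, inI a b x -> Im (g x) = 0) -> (k <= m)%nat ->
  (forall j, (j < k)%nat -> G j b = RtoC 0) -> G k b <> RtoC 0 ->
  (exists d, 0 < d /\ forall x, inI a b x -> b - d < x -> 0 <= Re (g x)) ->
  0 < (-1) ^ k * Re (G k b).
Proof.
  intros Hab HG Hg Hk HZ HN [d [Hd Hpos]].
  assert (Hb : inI a b b) by (unfold inI; lra).
  pose proof (derivs_real a b m g G Hab HG Hg) as HR.
  assert (Hre : Re (G k b) <> 0).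
  { intro E. apply HN. apply C_eq0; auto. }
  assert (Hs : (-1) ^ k * Re (G k b) <> 0).
  { apply Rmult_integral_contrapositive. split; auto. apply pow_nonzero. lra. }
  destruct (Rlt_dec 0 ((-1) ^ k * Re (G k b))) as [|Hn]; auto. exfalso.
  destruct k as [|k'].
  - destruct HG as [H0 _]. rewrite H0 in Hs, Hn by auto. simpl in Hn.
    pose proof (Hpos b Hb ltac:(lra)). simpl in Hs. lra.
  - destruct (core_left k' (fun j x => Re (G j x)) a b Hab) as [e [He [Heb Hx]]].
    + intros j Hj. simpl. rewrite HZ by lia. reflexivity.
    + intros j Hj. apply (to_RD_left a b); auto. destruct HG as [_ H1]. apply H1; [lia|auto].
    + intros j Hj x Hx. apply (to_dpl a b); auto. destruct HG as [_ H1].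
      apply H1; [lia|]. unfold inI. lra.
    + simpl. simpl in Hn, Hs. lra.
    + set (x := b - Rmin e d / 2).
      assert (0 < Rmin e d) by (apply Rmin_glb_lt; lra).
      pose proof (Rmin_l e d). pose proof (Rmin_r e d).
      specialize (Hx x ltac:(unfold x; lra)). simpl in Hx.
      destruct HG as [HG0 _]. rewrite HG0 in Hx by (unfold inI, x; lra).
      pose proof (Hpos x ltac:(unfold inI, x; lra) ltac:(unfold x; lra)). lra.
Qed.


Ltac absum := repeat (match goal with |- context [sum_n ?f ?N] => let s := fresh "s" in set (s := (sum_n f N : C)) end).
Ltac Cring := absum; lazymatch goal with |- @eq _ ?x ?y => change (@eq C x y); ring end.
Ltac Cfield := absum; lazymatch goal with |- @eq _ ?x ?y => change (@eq C x y); field end.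

Lemma sumC_O (f : nat -> C) : (sum_n f 0 : C) = f O.
Proof. exact (sum_O f). Qed.
Lemma sumC_S (f : nat -> C) N : (sum_n f (S N) : C) = Cplus ((sum_n f N : C)) (f (S N)).
Proof. exact (sum_Sn f N). Qed.
Lemma sumC_ext (f g : nat -> C) N : (forall j, (j <= N)%nat -> f j = g j) -> (sum_n f N : C) = (sum_n g N : C).
Proof. exact (sum_n_ext_loc f g N). Qed.
Lemma sumC_plus (f g : nat -> C) N : (sum_n (fun j => Cplus (f j) (g j)) N : C) = Cplus ((sum_n f N : C)) ((sum_n g N : C)).
Proof. exact (sum_n_plus f g N). Qed.
Lemma sumC_mult_l (c : C) (f : nat -> C) N : (sum_n (fun j => Cmult c (f j)) N : C) = Cmult c ((sum_n f N : C)).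
Proof. exact (sum_n_mult_l (K:=C_Ring) c f N). Qed.
Lemma sumC_mult_r (c : C) (f : nat -> C) N : (sum_n (fun j => Cmult (f j) c) N : C) = Cmult ((sum_n f N : C)) c.
Proof. exact (sum_n_mult_r (K:=C_Ring) c f N). Qed.
Lemma sumC_switch (u : nat -> nat -> C) m n :
  (sum_n (fun i => sum_n (u i) n) m : C) = (sum_n (fun j => sum_n (fun i => u i j) m) n : C).
Proof. exact (sum_n_switch u m n). Qed.

Lemma sumC_zero (f : nat -> C) N : (forall j, (j <= N)%nat -> f j = RtoC 0) -> (sum_n f N : C) = RtoC 0.
Proof.
  induction N as [|N IH]; intros H.
  - rewrite sumC_O. apply H. lia.
  - rewrite sumC_S, (H (S N)) by lia. rewrite IH. Cring.
    intros j Hj. apply H. lia.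
Qed.

Lemma sumC_single (f : nat -> C) N i : (i <= N)%nat ->
  (forall j, (j <= N)%nat -> j <> i -> f j = RtoC 0) -> (sum_n f N : C) = f i.
Proof.
  induction N as [|N IH]; intros Hi H.
  - rewrite sumC_O. replace i with O by lia. reflexivity.
  - rewrite sumC_S. destruct (Nat.eq_dec i (S N)) as [->|Hne].
    + rewrite sumC_zero. Cring. intros j Hj. apply H; lia.
    + rewrite IH by (auto; lia). rewrite (H (S N)) by lia. Cring.
Qed.

Lemma sumC_first (f : nat -> C) N : (sum_n f (S N) : C) = Cplus (f O) ((sum_n (fun j => f (S j)) N : C)).
Proof.
  induction N as [|N IH].
  - rewrite sumC_S, !sumC_O. reflexivity.
  - rewrite sumC_S, IH, sumC_S. Cring.
Qed.

Definition skip (i0 i : nat) : nat := if Nat.ltb i i0 then i else S i.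

Lemma sumC_skip (g : nat -> C) N i0 : (i0 <= S N)%nat ->
  (sum_n g (S N) : C) = Cplus ((sum_n (fun i => g (skip i0 i)) N : C)) (g i0).
Proof.
  revert i0. induction N as [|N IH]; intros i0 Hi.
  - rewrite sumC_S, !sumC_O. unfold skip.
    destruct i0 as [|[|i0]]; simpl; [ring|reflexivity|lia].
  - destruct (Nat.eq_dec i0 (S (S N))) as [->|Hne].
    + rewrite sumC_S. f_equal. apply sumC_ext. intros j Hj. unfold skip.
      replace (Nat.ltb j (S (S N))) with true by (symmetry; apply Nat.ltb_lt; lia). reflexivity.
    + rewrite sumC_S, (IH i0) by lia. rewrite (sumC_S (fun i => g (skip i0 i))).
      unfold skip at 3. replace (Nat.ltb (S N) i0) with false by (symmetry; apply Nat.ltb_ge; lia).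
      Cring.
Qed.

Lemma Cmult_eq0 z w : Cmult z w = RtoC 0 -> w <> RtoC 0 -> z = RtoC 0.
Proof.
  intros H Hw. replace z with (Cmult (Cmult z w) (Cinv w)) by (field; auto).
  rewrite H. Cring.
Qed.

Lemma tri N L (ord : nat -> nat) (g : nat -> C) (V : nat -> nat -> C) (Rv : nat -> C) :
  (forall i j, (i <= N)%nat -> (j <= N)%nat -> ord i = ord j -> i = j) ->
  (forall l i, (i <= N)%nat -> (l < ord i)%nat -> V l i = RtoC 0) ->
  (forall i, (i <= N)%nat -> V (ord i) i <> RtoC 0) ->
  (forall l, (l <= L)%nat -> (sum_n (fun i => Cmult (g i) (V l i)) N : C) = Rv l) ->
  (forall l, (l < L)%nat -> Rv l = RtoC 0) ->
  (forall i, (i <= N)%nat -> (ord i < L)%nat -> g i = RtoC 0) /\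
  (forall i, (i <= N)%nat -> ord i = L -> Cmult (g i) (V L i) = Rv L).
Proof.
  intros Hinj HV HV0 Hs HR.
  assert (A : forall l, (l < L)%nat -> forall i, (i <= N)%nat -> ord i = l -> g i = RtoC 0).
  { intro l. induction l as [l IH] using (well_founded_induction lt_wf).
    intros Hl i Hi Ho. apply (Cmult_eq0 _ (V l i)); [|subst; auto].
    rewrite <- (HR l Hl), <- (Hs l) by lia. symmetry. apply (sumC_single (fun i => Cmult (g i) (V l i))); auto.
    intros j Hj Hji. destruct (Nat.lt_total (ord j) l) as [Hlt|[Heq|Hgt]].
    - rewrite (IH (ord j) Hlt) by (auto; lia). Cring.
    - exfalso. apply Hji. apply Hinj; auto. lia.
    - rewrite HV by auto. Cring. }
  split.
  - intros i Hi Ho. apply (A (ord i)); auto.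
  - intros i Hi Ho. rewrite <- (Hs L) by lia. symmetry. apply (sumC_single (fun i => Cmult (g i) (V L i))); auto.
    intros j Hj Hji. destruct (Nat.lt_total (ord j) L) as [Hlt|[Heq|Hgt]].
    + rewrite (A (ord j) Hlt j) by auto. Cring.
    + exfalso. apply Hji. apply Hinj; auto. lia.
    + rewrite HV by auto. Cring.
Qed.

Lemma fin_choice {X : Type} N (P : nat -> X -> Prop) :
  (forall i, (i <= N)%nat -> exists x, P i x) -> exists f : nat -> X, forall i, (i <= N)%nat -> P i (f i).
Proof.
  induction N as [|N IH]; intros H.
  - destruct (H O (le_n _)) as [x Hx]. exists (fun _ => x). intros i Hi.
    replace i with O by lia. auto.
  - destruct IH as [f Hf]. { intros i Hi. apply H. lia. }
    destruct (H (S N) (le_n _)) as [x Hx].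
    exists (fun i => if Nat.eqb i (S N) then x else f i). intros i Hi.
    destruct (Nat.eqb_spec i (S N)) as [->|Hne]; auto. apply Hf. lia.
Qed.


Lemma C1_neq0 : RtoC 1 <> RtoC 0.
Proof. intro E. apply (f_equal Re) in E. simpl in E. lra. Qed.

Lemma dep N : forall (A : nat -> nat -> C), exists c : nat -> C,
  (exists i, (i <= N)%nat /\ c i <> RtoC 0) /\
  forall j, (j < N)%nat -> (sum_n (fun i => Cmult (c i) (A i j)) N : C) = RtoC 0.
Proof.
  induction N as [|N IH]; intros A.
  - exists (fun _ => RtoC 1). split.
    + exists O. split; auto. apply C1_neq0.
    + intros j Hj. lia.
  - destruct (classic (forall i, (i <= S N)%nat -> A i N = RtoC 0)) as [Hz|Hnz].
    + destruct (IH A) as [c' [[i0 [Hi0 Hc0]] Hc']].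
      exists (fun i => if Nat.leb i N then c' i else RtoC 0). split.
      * exists i0. split; [lia|].
        replace (Nat.leb i0 N) with true by (symmetry; apply Nat.leb_le; auto). auto.
      * intros j Hj. rewrite sumC_S.
        replace (Nat.leb (S N) N) with false by (symmetry; apply Nat.leb_gt; lia).
        rewrite (sumC_ext _ (fun i => Cmult (c' i) (A i j))).
        2:{ intros i Hi. replace (Nat.leb i N) with true by (symmetry; apply Nat.leb_le; auto).
            reflexivity. }
        destruct (Nat.eq_dec j N) as [->|Hne].
        -- rewrite sumC_zero. Cring. intros i Hi. rewrite Hz by lia. Cring.
        -- rewrite Hc' by lia. Cring.
    + apply not_all_ex_not in Hnz. destruct Hnz as [i0 Hi0].
      apply imply_to_and in Hi0. destruct Hi0 as [Hi0 Ha].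
      set (p := A i0 N) in *.
      set (B := fun i j => Cminus (A (skip i0 i) j) (Cmult (Cdiv (A (skip i0 i) N) p) (A i0 j))).
      destruct (IH B) as [c' [[k0 [Hk0 Hck]] Hc']].
      set (s := (sum_n (fun i => Cmult (c' i) (A (skip i0 i) N)) N : C)).
      set (c := fun i => if Nat.eqb i i0 then Copp (Cdiv s p)
                         else c' (if Nat.ltb i i0 then i else pred i)).
      assert (Hcs : forall i, c (skip i0 i) = c' i).
      { intros i. unfold c, skip. destruct (Nat.ltb_spec i i0).
        - replace (Nat.eqb i i0) with false by (symmetry; apply Nat.eqb_neq; lia).
          replace (Nat.ltb i i0) with true by (symmetry; apply Nat.ltb_lt; lia). reflexivity.
        - replace (Nat.eqb (S i) i0) with false by (symmetry; apply Nat.eqb_neq; lia).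
          replace (Nat.ltb (S i) i0) with false by (symmetry; apply Nat.ltb_ge; lia).
          reflexivity. }
      assert (Hc0 : c i0 = Copp (Cdiv s p)). { unfold c. rewrite Nat.eqb_refl. reflexivity. }
      exists c. split.
      * exists (skip i0 k0). split.
        -- unfold skip. destruct (Nat.ltb k0 i0); lia.
        -- rewrite Hcs. auto.
      * intros j Hj. rewrite (sumC_skip (fun i => Cmult (c i) (A i j)) N i0 Hi0).
        rewrite (sumC_ext _ (fun i => Cmult (c' i) (A (skip i0 i) j)))
          by (intros; rewrite Hcs; reflexivity).
        rewrite Hc0.
        destruct (Nat.eq_dec j N) as [->|Hne].
        -- fold s. change (A i0 N) with p. Cfield. auto.
        -- specialize (Hc' j ltac:(lia)). unfold B in Hc'.
           rewrite (sumC_ext _ (fun i => Cplus (Cmult (c' i) (A (skip i0 i) j))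
              (Cmult (Copp (Cdiv (A i0 j) p)) (Cmult (c' i) (A (skip i0 i) N))))) in Hc'
             by (intros; unfold Cminus, Cdiv; Cring).
           rewrite sumC_plus, sumC_mult_l in Hc'. fold s in Hc'.
           rewrite <- Hc'. unfold Cdiv. Cring.
Qed.


Lemma zo_transfer a b m f G c k : a < b -> inI a b c -> derivs_on a b m f G -> (k <= m)%nat ->
  zero_order a b f c k -> (forall i, (i < k)%nat -> G i c = RtoC 0) /\ G k c <> RtoC 0.
Proof.
  intros Hab Hc HG Hk [g [Hg [Z N]]].
  pose proof (derivs_unique a b k f G g Hab (derivs_weaken _ _ _ _ _ _ HG Hk) Hg) as E.
  split.
  - intros i Hi. rewrite E by (auto; lia). auto.
  - rewrite E by auto. auto.
Qed.

Lemma lincomb_zero_derivs a b M N (c : nat -> C) g G :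
  a < b -> (forall j, (j <= N)%nat -> derivs_on a b M (g j) (G j)) ->
  eqon a b (lincomb N c g) (fun _ => RtoC 0) ->
  forall l, (l <= M)%nat -> forall x, inI a b x ->
  (sum_n (fun j => Cmult (c j) (G j l x)) N : C) = RtoC 0.
Proof.
  intros Hab HG E l Hl x Hx.
  pose proof (derivs_eqon _ _ _ _ _ _ E (derivs_lincomb a b M N c g G HG)) as H1.
  pose proof (derivs_unique _ _ _ _ _ _ Hab H1 (derivs_const a b M (RtoC 0)) l Hl x Hx) as H2.
  simpl in H2. unfold lincomb in H2. rewrite H2. destruct l; reflexivity.
Qed.

Lemma indep_gen a b M N g G : a < b -> (N <= M)%nat ->
  (forall j, (j <= N)%nat -> derivs_on a b M (g j) (G j)) ->
  (forall j, (j <= N)%nat -> (forall i, (i < j)%nat -> G j i a = RtoC 0) /\ G j j a <> RtoC 0) ->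
  forall c, eqon a b (lincomb N c g) (fun _ => RtoC 0) ->
  forall k, (k <= N)%nat -> c k = RtoC 0.
Proof.
  intros Hab HNM HG HZ c E.
  assert (Ha : inI a b a) by (unfold inI; lra).
  destruct (tri N N (fun i => i) c (fun l i => G i l a) (fun _ => RtoC 0)) as [T1 T2].
  - auto.
  - intros l i Hi Hl. apply HZ; auto.
  - intros i Hi. apply HZ; auto.
  - intros l Hl. apply (lincomb_zero_derivs a b M N c g G); auto. lia.
  - auto.
  - intros k Hk. destruct (Nat.eq_dec k N) as [->|Hne].
    + apply (Cmult_eq0 _ (G N N a)); [|apply HZ; auto]. apply T2; auto.
    + apply T1; auto. lia.
Qed.

Lemma link N M (A : nat -> nat -> C) (c : nat -> C) (v w : nat -> R -> C) x :
  (forall i, (i <= N)%nat -> v i x = (sum_n (fun j => Cmult (A i j) (w j x)) M : C)) ->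
  (forall j, (j <= M)%nat -> (sum_n (fun i => Cmult (c i) (A i j)) N : C) = RtoC 0) ->
  (sum_n (fun i => Cmult (c i) (v i x)) N : C) = RtoC 0.
Proof.
  intros Hv Hc.
  rewrite (sumC_ext _ (fun i => sum_n (fun j => Cmult (c i) (Cmult (A i j) (w j x))) M)).
  2:{ intros i Hi. rewrite Hv by auto. rewrite sumC_mult_l. reflexivity. }
  rewrite sumC_switch.
  apply sumC_zero. intros j Hj.
  rewrite (sumC_ext _ (fun i => Cmult (Cmult (c i) (A i j)) (w j x))).
  2:{ intros i Hi. Cring. }
  rewrite sumC_mult_r, Hc by auto. Cring.
Qed.

Lemma sum_RtoC_Im (w : nat -> C) N :
  (sum_n (fun k => RtoC (Im (w k))) N : C) = RtoC (Im (sum_n w N : C)).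
Proof.
  induction N as [|N IH].
  - rewrite !sumC_O. reflexivity.
  - rewrite !sumC_S, IH. destruct (sum_n w N : C), (w (S N)). unfold RtoC, Cplus. simpl.
    f_equal. ring.
Qed.

Lemma RtoC_Im_mult (b z : C) : Im z = 0 -> Cmult (RtoC (Im b)) z = RtoC (Im (Cmult b z)).
Proof.
  destruct b as [b1 b2], z as [z1 z2]. simpl. intros ->. unfold RtoC, Cmult. simpl. f_equal; ring.
Qed.

Lemma C_real z : Im z = 0 -> z = RtoC (Re z).
Proof. destruct z. simpl. intros ->. reflexivity. Qed.

Lemma Re_RtoC_mult_Im (g : C) r : Im (Cmult g (RtoC r)) = Im g * r.
Proof. destruct g. simpl. ring. Qed.
Lemma Re_RtoC_mult_Re (g : C) r : Re (Cmult g (RtoC r)) = Re g * r.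
Proof. destruct g. simpl. ring. Qed.
Lemma RtoC_mult' x y : Cmult (RtoC x) (RtoC y) = RtoC (x * y).
Proof. unfold RtoC, Cmult. simpl. f_equal; ring. Qed.
Lemma RtoC_inv' x : x <> 0 -> Cinv (RtoC x) = RtoC (/ x).
Proof. intros H. unfold RtoC, Cinv. simpl. f_equal; field; auto. Qed.
Lemma RtoC_opp' x : Copp (RtoC x) = RtoC (- x).
Proof. unfold RtoC, Copp. simpl. f_equal; ring. Qed.


Lemma final_alg (g qa pa fa qb pb fb bk bk0 : C) (s : R) :
  Im qa = 0 -> Im pa = 0 -> Im fa = 0 -> Im qb = 0 -> Im pb = 0 -> Im fb = 0 ->
  Im bk = 0 -> Im bk0 = 0 ->
  0 < Re qa -> 0 < Re pa -> 0 < Re fa -> 0 < Re fb -> 0 < s * Re qb -> 0 < - s * Re pb ->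
  0 < Re bk0 ->
  Cmult g qa = Cmult bk (Cmult pa (Cinv fa)) ->
  Cmult g qb = Copp (Cmult bk0 (Cmult pb (Cinv fb))) ->
  0 < Re bk.
Proof.
  intros I1 I2 I3 I4 I5 I6 I7 I8 S1 S2 S3 S4 S5 S6 S7 E1 E2.
  rewrite (C_real qa), (C_real pa), (C_real fa), (C_real bk) in E1 by auto.
  rewrite (C_real qb), (C_real pb), (C_real fb), (C_real bk0) in E2 by auto.
  rewrite RtoC_inv', !RtoC_mult' in E1 by lra.
  rewrite RtoC_inv', !RtoC_mult', RtoC_opp' in E2 by lra.
  pose proof (f_equal Im E1) as J1. pose proof (f_equal Re E1) as K1.
  pose proof (f_equal Re E2) as K2.
  rewrite Re_RtoC_mult_Im in J1. rewrite Re_RtoC_mult_Re in K1, K2. simpl in J1, K1, K2.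
  set (gr := Re g) in *.
  assert (Hg : 0 < gr).
  { assert (gr * (s * Re qb) = Re bk0 * (- s * Re pb) * / Re fb) by (replace (gr * (s * Re qb)) with (s * (gr * Re qb)) by ring; rewrite K2; ring).
    assert (0 < Re bk0 * (- s * Re pb) * / Re fb).
    { apply Rmult_lt_0_compat; [nra|]. apply Rinv_0_lt_compat; lra. }
    nra. }
  assert (Re bk = (Re bk * (Re pa * / Re fa)) * Re fa / Re pa) by (field; lra).
  rewrite <- K1 in H.
  rewrite H. apply Rdiv_lt_0_compat; [|lra]. repeat apply Rmult_lt_0_compat; lra.
Qed.


Theorem theorem7 (realK : bool) (a b : R) (n : nat)
  (U : (R -> C) -> Prop) (p q : nat -> R -> C) (f0 : R -> C) :
  a < b ->
  subspace realK a b n U ->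
  has_dim_succ realK a b n U ->
  bernstein_basis realK a b n U p ->
  loc_nonneg a b n p ->
  U f0 ->
  strictly_pos a b f0 ->
  ((1 <= n)%nat -> bernstein_basis realK a b (n - 1) (Dspace a b f0 U) q) ->
  ((1 <= n)%nat -> loc_nonneg a b (n - 1) q) ->
  (exists beta : nat -> C, (forall k, (k <= n)%nat -> inK realK (beta k)) /\
     eqon a b f0 (lincomb n beta p)) /\
  (forall beta : nat -> C, (forall k, (k <= n)%nat -> inK realK (beta k)) ->
     eqon a b f0 (lincomb n beta p) ->
     forall k, (k <= n)%nat -> Im (beta k) = 0 /\ 0 < Re (beta k)).
Proof.
  intros Hab Hsub Hdim HB HLN HU0 Hpos HBq HLNq.
  assert (Ha : inI a b a) by (unfold inI; lra).
  assert (Hb : inI a b b) by (unfold inI; lra).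
  destruct Hsub as [HCm _].
  destruct (HCm f0 HU0) as [_ [F0 [HF0 _]]].
  assert (Hnz : forall y, inI a b y -> f0 y <> RtoC 0).
  { intros y Hy E. destruct (Hpos y Hy) as [_ H]. rewrite E in H. simpl in H. lra. }
  destruct (inv_ex a b n f0 F0 HF0 Hnz n (le_n n)) as [Rv HR].
  destruct HLN as [Preal [dp [Hdp Pnn]]].
  destruct (fin_choice n (fun j G => derivs_on a b n (p j) G)) as [P HP].
  { intros j Hj. destruct (HB j Hj) as [_ [[_ [G [HG _]]] _]]. exists G; auto. }
  assert (PZa : forall j, (j <= n)%nat -> (forall i, (i < j)%nat -> P j i a = RtoC 0) /\ P j j a <> RtoC 0).
  { intros j Hj. apply (zo_transfer a b n (p j)); auto. apply HB; auto. }
  assert (PZb : forall j, (j <= n)%nat -> (forall i, (i < n - j)%nat -> P j i b = RtoC 0) /\ P j (n - j)%nat b <> RtoC 0).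
  { intros j Hj. apply (zo_transfer a b n (p j)); auto. lia. apply HB; auto. }
  destruct (fin_choice n (fun j G => derivs_on a b n (fun x => Cmult (p j x) (Cinv (f0 x))) G)) as [Q HQ].
  { intros j Hj. apply (prod_ex a b n _ _ (P j) Rv); auto. }
  assert (QZa : forall j, (j <= n)%nat -> (forall i, (i < j)%nat -> Q j i a = RtoC 0) /\
                 Q j j a = Cmult (P j j a) (Cinv (f0 a))).
  { intros j Hj. apply (prod_zero a b a Hab Ha j n (p j) (fun x => Cinv (f0 x)) (P j) Rv (Q j)); auto.
    apply PZa; auto. }
  assert (QZb : forall j, (j <= n)%nat -> (forall i, (i < n - j)%nat -> Q j i b = RtoC 0) /\
                 Q j (n - j)%nat b = Cmult (P j (n - j)%nat b) (Cinv (f0 b))).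
  { intros j Hj. apply (prod_zero a b b Hab Hb (n - j) n (p j) (fun x => Cinv (f0 x)) (P j) Rv (Q j)); auto.
    lia. apply PZb; auto. }
  assert (Pind : forall c, eqon a b (lincomb n c p) (fun _ => RtoC 0) -> forall k, (k <= n)%nat -> c k = RtoC 0).
  { apply (indep_gen a b n n p P); auto. }
  assert (Span : forall h, U h -> exists g, eqon a b h (lincomb n g p)).
  { intros h Hh. destruct Hdim as [e [_ [_ He]]].
    destruct (He h Hh) as [ch [_ Hch]].
    destruct (fin_choice n (fun i c => eqon a b (p i) (lincomb n c e))) as [Cp HCp].
    { intros i Hi. destruct (HB i Hi) as [HUp _]. destruct (He _ HUp) as [c [_ Hc]]. eauto. }
    set (A := fun i j => match i with O => ch j | S i' => Cp i' j end).
    destruct (dep (S n) A) as [c [[i0 [Hi0 Hc0]] Hc]].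
    set (v := fun i => match i with O => h | S i' => p i' end).
    assert (HL : forall x, inI a b x -> (sum_n (fun i => Cmult (c i) (v i x)) (S n) : C) = RtoC 0).
    { intros x Hx. apply (link (S n) n A c v e x).
      - intros i Hi. destruct i as [|i']; simpl.
        + apply Hch; auto.
        + apply HCp; auto. lia.
      - intros j Hj. apply Hc. lia. }
    destruct (classic (c O = RtoC 0)) as [Hz|Hnz0].
    - exfalso.
      assert (Z : forall i, (i <= n)%nat -> c (S i) = RtoC 0).
      { apply Pind. intros x Hx. unfold lincomb. specialize (HL x Hx).
        rewrite sumC_first in HL. simpl in HL. rewrite Hz in HL.
        rewrite <- HL. Cring. }
      destruct i0 as [|i0]; auto. apply Hc0. apply Z. lia.
    - exists (fun i => Cmult (Copp (c (S i))) (Cinv (c O))).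
      intros x Hx. unfold lincomb. specialize (HL x Hx).
      rewrite sumC_first in HL. simpl in HL.
      rewrite (sumC_ext _ (fun i => Cmult (Copp (Cinv (c O))) (Cmult (c (S i)) (p i x)))).
      2:{ intros i Hi. Cring. }
      rewrite sumC_mult_l.
      set (S1 := (sum_n (fun i => Cmult (c (S i)) (p i x)) n : C)) in *.
      assert (E : S1 = Copp (Cmult (c O) (h x))).
      { replace S1 with (Cplus (Cplus (Cmult (c O) (h x)) S1) (Copp (Cmult (c O) (h x)))) by Cring.
        rewrite HL. Cring. }
      rewrite E. Cfield. auto. }
  assert (Breal : forall beta, eqon a b f0 (lincomb n beta p) -> forall k, (k <= n)%nat -> Im (beta k) = 0).
  { intros beta Hbeta.
    assert (E : eqon a b (lincomb n (fun k => RtoC (Im (beta k))) p) (fun _ => RtoC 0)).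
    { intros x Hx. unfold lincomb.
      rewrite (sumC_ext _ (fun k => RtoC (Im (Cmult (beta k) (p k x))))).
      2:{ intros k Hk. apply RtoC_Im_mult. apply Preal; auto. }
      rewrite (sum_RtoC_Im (fun k => Cmult (beta k) (p k x))).
      pose proof (Hbeta x Hx) as H. unfold lincomb in H. rewrite <- H.
      rewrite (proj1 (Hpos x Hx)). reflexivity. }
    intros k Hk. pose proof (Pind _ E k Hk) as H. apply (f_equal Re) in H. simpl in H. auto. }
  split.
  { destruct (Span f0 HU0) as [beta Hbeta]. exists beta. split; auto.
    intros k Hk Hr. apply (Breal beta); auto. }
  intros beta _ Hbeta.
  pose proof (Breal beta Hbeta) as BR.
  assert (B0 : 0 < Re (beta O)).
  { assert (S0 : 0 < Re (P O O a)).
    { apply (sign_a a b n (p O) (P O) O Hab (HP O ltac:(lia))).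
      - intros x Hx. apply Preal; auto. lia.
      - lia.
      - intros j Hj. lia.
      - apply PZa. lia.
      - exists dp; split; auto; intros x Hx Hxa; apply Pnn; auto; lia. }
    assert (E : f0 a = Cmult (beta O) (p O a)).
    { rewrite (Hbeta a Ha). unfold lincomb.
      apply (sumC_single (fun k => Cmult (beta k) (p k a))); [lia|].
      intros j Hj Hj0. destruct (HP j Hj) as [HP0 _]. rewrite <- (HP0 a Ha).
      rewrite (proj1 (PZa j Hj) O) by lia. Cring. }
    destruct (HP O ltac:(lia)) as [HP0 _]. rewrite (HP0 a Ha) in S0.
    rewrite (C_real (beta O)), (C_real (p O a)), RtoC_mult' in E.
    2:{ apply Preal; auto. lia. }
    2:{ apply BR. lia. }
    apply (f_equal Re) in E. simpl in E. destruct (Hpos a Ha) as [_ Hfa].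
    rewrite E in Hfa. nra. }
  assert (B0nz : beta O <> RtoC 0).
  { intro E. rewrite E in B0. simpl in B0. lra. }
  destruct n as [|n'].
  { intros k Hk. replace k with O by lia. split; auto. }
  specialize (HBq ltac:(lia)). specialize (HLNq ltac:(lia)).
  replace (S n' - 1)%nat with n' in HBq, HLNq by lia.
  destruct HLNq as [Qreal [dq [Hdq Qnn]]].
  destruct (fin_choice n' (fun i G => derivs_on a b n' (q i) G)) as [Qq HQq].
  { intros i Hi. destruct (HBq i Hi) as [_ [[_ [G [HG _]]] _]]. exists G; auto. }
  assert (QqZa : forall i, (i <= n')%nat -> (forall l, (l < i)%nat -> Qq i l a = RtoC 0) /\ Qq i i a <> RtoC 0).
  { intros i Hi. apply (zo_transfer a b n' (q i)); auto. apply HBq; auto. }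
  assert (QqZb : forall i, (i <= n')%nat -> (forall l, (l < n' - i)%nat -> Qq i l b = RtoC 0) /\ Qq i (n' - i)%nat b <> RtoC 0).
  { intros i Hi. apply (zo_transfer a b n' (q i)); auto. lia. apply HBq; auto. }
  assert (qind : forall c, eqon a b (lincomb n' c q) (fun _ => RtoC 0) -> forall k, (k <= n')%nat -> c k = RtoC 0).
  { apply (indep_gen a b n' n' q Qq); auto. }
  assert (SB : forall l, (1 <= l <= S n')%nat -> forall x, inI a b x ->
            (sum_n (fun j => Cmult (beta j) (Q j l x)) (S n') : C) = RtoC 0).
  { intros l Hl x Hx.
    pose proof (derivs_lincomb a b (S n') (S n') beta (fun j x => Cmult (p j x) (Cinv (f0 x))) Q HQ) as D1.
    assert (E1 : eqon a b (lincomb (S n') beta (fun j x => Cmult (p j x) (Cinv (f0 x)))) (fun _ => RtoC 1)).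
    { intros y Hy. unfold lincomb.
      rewrite (sumC_ext _ (fun j => Cmult (Cmult (beta j) (p j y)) (Cinv (f0 y)))) by (intros; Cring).
      rewrite sumC_mult_r. pose proof (Hbeta y Hy) as H. unfold lincomb in H. rewrite <- H.
      Cfield. apply Hnz; auto. }
    pose proof (derivs_unique _ _ _ _ _ _ Hab (derivs_eqon _ _ _ _ _ _ E1 D1) (derivs_const a b (S n') (RtoC 1)) l ltac:(lia) x Hx) as H.
    destruct l as [|l]; [lia|]. exact H. }
  assert (Qrep : forall i, (i <= n')%nat -> exists g, forall x, inI a b x ->
            q i x = lincomb (S n') g (fun j => Q j 1%nat) x).
  { intros i Hi. destruct (HBq i Hi) as [[h [Hh Hd]] _]. destruct (Span h Hh) as [g Hg].
    exists g. intros x Hx.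
    pose proof (derivs_lincomb a b (S n') (S n') g (fun j x => Cmult (p j x) (Cinv (f0 x))) Q HQ) as D1.
    apply (deriv_unique a b (fun y => Cdiv (h y) (f0 y)) x); auto.
    apply (deriv_ext a b (lincomb (S n') g (fun j x => Cmult (p j x) (Cinv (f0 x))))); auto.
    - intros y Hy. rewrite (Hg y Hy). unfold lincomb, Cdiv.
      rewrite <- sumC_mult_r. apply sumC_ext. intros j Hj. Cring.
    - exact (derivs_first _ _ _ _ _ x D1 Hx). }
  assert (Row : forall g x, inI a b x -> lincomb (S n') g (fun j => Q j 1%nat) x =
            (sum_n (fun j => Cmult (Cminus (g (S j)) (Cmult (g O) (Cdiv (beta (S j)) (beta O)))) (Q (S j) 1%nat x)) n' : C)).
  { intros g x Hx. unfold lincomb. rewrite sumC_first.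
    pose proof (SB 1%nat ltac:(lia) x Hx) as H1. rewrite sumC_first in H1.
    rewrite (sumC_ext (fun j => Cmult (Cminus (g (S j)) (Cmult (g O) (Cdiv (beta (S j)) (beta O)))) (Q (S j) 1%nat x)) (fun j => Cplus (Cmult (g (S j)) (Q (S j) 1%nat x))
        (Cmult (Copp (Cdiv (g O) (beta O))) (Cmult (beta (S j)) (Q (S j) 1%nat x)))))
      by (intros; unfold Cminus, Cdiv; Cring).
    rewrite sumC_plus, sumC_mult_l.
    set (S2 := (sum_n (fun j => Cmult (beta (S j)) (Q (S j) 1%nat x)) n' : C)) in *.
    assert (EQ : Q O 1%nat x = Copp (Cdiv S2 (beta O))).
    { replace (Q O 1%nat x) with (Cdiv (Cminus (Cplus (Cmult (beta O) (Q O 1%nat x)) S2) S2) (beta O))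
        by (Cfield; auto).
      rewrite H1. Cfield. auto. }
    rewrite EQ. Cfield. auto. }
  assert (Step : forall k0, (k0 <= n')%nat -> 0 < Re (beta k0) -> 0 < Re (beta (S k0))).
  { intros k0 Hk0 Bk0.
    set (cr := fun j => if Nat.ltb j (S k0) then RtoC 0 else beta j).
    set (cl := fun j => if Nat.ltb j (S k0) then beta j else RtoC 0).
    set (r := lincomb (S n') cr (fun j => Q j 1%nat)).
    set (rs := fun l => lincomb (S n') cr (fun j => Q j (S l))).
    assert (Hr : derivs_on a b n' r rs).
    { exact (derivs_lincomb a b n' (S n') cr (fun j => Q j 1%nat) (fun j l => Q j (S l))
               (fun j Hj => derivs_shift _ _ _ _ _ (HQ j Hj))). }
    destruct (fin_choice n' (fun i g => forall x, inI a b x -> q i x = lincomb (S n') g (fun j => Q j 1%nat) x))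
      as [Gq HGq].
    { exact Qrep. }
    set (rowA := fun (g : nat -> C) j => Cminus (g (S j)) (Cmult (g O) (Cdiv (beta (S j)) (beta O)))).
    set (A := fun i j => if Nat.leb i n' then rowA (Gq i) j else rowA cr j).
    destruct (dep (S n') A) as [c [[i0 [Hi0 Hc0]] Hc]].
    set (v := fun i x => if Nat.leb i n' then q i x else r x).
    assert (HL : forall x, inI a b x -> (sum_n (fun i => Cmult (c i) (v i x)) (S n') : C) = RtoC 0).
    { intros x Hx. apply (link (S n') n' A c v (fun j => Q (S j) 1%nat) x).
      - intros i Hi. unfold v, A. destruct (Nat.leb_spec i n').
        + rewrite (HGq i) by auto. unfold rowA. apply Row; auto.
        + unfold r, rowA. apply Row; auto.
      - intros j Hj. apply Hc. lia. }
    assert (HLs : forall x, inI a b x ->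
              Cplus (sum_n (fun i => Cmult (c i) (q i x)) n' : C) (Cmult (c (S n')) (r x)) = RtoC 0).
    { intros x Hx. pose proof (HL x Hx) as H. rewrite sumC_S in H. unfold v in H.
      replace (Nat.leb (S n') n') with false in H by (symmetry; apply Nat.leb_gt; lia).
      rewrite (sumC_ext (fun i => Cmult (c i) (if Nat.leb i n' then q i x else r x))
                 (fun i => Cmult (c i) (q i x))) in H.
      - exact H.
      - intros i Hi. replace (Nat.leb i n') with true by (symmetry; apply Nat.leb_le; auto). reflexivity. }
    assert (cn : c (S n') <> RtoC 0).
    { intro Hz. assert (Z : forall i, (i <= n')%nat -> c i = RtoC 0).
      { apply qind. intros x Hx. unfold lincomb. pose proof (HLs x Hx) as H. rewrite Hz in H.
        rewrite <- H. Cring. }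
      destruct (Nat.eq_dec i0 (S n')) as [->|Hne]; auto. apply Hc0. apply Z. lia. }
    set (g := fun i => Cmult (Copp (c i)) (Cinv (c (S n')))).
    assert (Rq : eqon a b r (lincomb n' g q)).
    { intros x Hx. pose proof (HLs x Hx) as H. unfold lincomb.
      rewrite (sumC_ext (fun i => Cmult (g i) (q i x))
                 (fun i => Cmult (Copp (Cinv (c (S n')))) (Cmult (c i) (q i x))))
        by (intros; unfold g; Cring).
      rewrite sumC_mult_l.
      set (S1 := (sum_n (fun i => Cmult (c i) (q i x)) n' : C)) in *.
      replace (r x) with (Cdiv (Cminus (Cplus S1 (Cmult (c (S n')) (r x))) S1) (c (S n')))
        by (Cfield; auto).
      rewrite H. Cfield. auto. }
    pose proof (derivs_lincomb a b n' n' g q Qq HQq) as Dq.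
    pose proof (derivs_unique _ _ _ _ _ _ Hab (derivs_eqon _ _ _ _ _ _ Rq Hr) Dq) as EU.
    destruct (tri n' k0 (fun i => i) g (fun l i => Qq i l a) (fun l => rs l a)) as [_ TA].
    - auto.
    - intros l i Hi Hl. apply QqZa; auto.
    - intros i Hi. apply QqZa; auto.
    - intros l Hl. symmetry. rewrite EU by (auto; lia). reflexivity.
    - intros l Hl. unfold rs, lincomb. apply sumC_zero. intros j Hj. unfold cr.
      destruct (Nat.ltb_spec j (S k0)).
      + Cring.
      + rewrite (proj1 (QZa j Hj)) by lia. Cring.
    pose proof (TA k0 Hk0 eq_refl) as EA.
    assert (EA' : rs k0 a = Cmult (beta (S k0)) (Cmult (P (S k0) (S k0) a) (Cinv (f0 a)))).
    { unfold rs, lincomb.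
      rewrite (sumC_single (fun j => Cmult (cr j) (Q j (S k0) a)) (S n') (S k0)) by
        (first [lia | intros j Hj Hjk; unfold cr; destruct (Nat.ltb_spec j (S k0));
         [Cring | rewrite (proj1 (QZa j Hj)) by lia; Cring]]).
      unfold cr. replace (Nat.ltb (S k0) (S k0)) with false by (symmetry; apply Nat.ltb_ge; lia).
      rewrite (proj2 (QZa (S k0) ltac:(lia))). reflexivity. }
    assert (RB : forall l, (l <= n')%nat ->
              rs l b = Copp (sum_n (fun j => Cmult (cl j) (Q j (S l) b)) (S n') : C)).
    { intros l Hl. pose proof (SB (S l) ltac:(lia) b Hb) as H. unfold rs, lincomb.
      rewrite (sumC_ext (fun j => Cmult (beta j) (Q j (S l) b))
                 (fun j => Cplus (Cmult (cr j) (Q j (S l) b)) (Cmult (cl j) (Q j (S l) b)))) in H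
        by (intros; unfold cr, cl; destruct (Nat.ltb j (S k0)); Cring).
      rewrite sumC_plus in H.
      set (T1 := (sum_n (fun j => Cmult (cr j) (Q j (S l) b)) (S n') : C)) in *.
      set (T2 := (sum_n (fun j => Cmult (cl j) (Q j (S l) b)) (S n') : C)) in *.
      replace T1 with (Cminus (Cplus T1 T2) T2) by Cring. rewrite H. Cring. }
    destruct (tri n' (n' - k0) (fun i => (n' - i)%nat) g (fun l i => Qq i l b) (fun l => rs l b)) as [_ TB].
    - intros i j Hi Hj E. lia.
    - intros l i Hi Hl. apply QqZb; auto.
    - intros i Hi. apply QqZb; auto.
    - intros l Hl. symmetry. rewrite EU by (auto; lia). reflexivity.
    - intros l Hl. rewrite RB by lia. rewrite sumC_zero; [Cring|].
      intros j Hj. unfold cl. destruct (Nat.ltb_spec j (S k0)).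
      + rewrite (proj1 (QZb j Hj)) by lia. Cring.
      + Cring.
    pose proof (TB k0 Hk0 ltac:(lia)) as EB.
    assert (EB' : rs (n' - k0)%nat b = Copp (Cmult (beta k0) (Cmult (P k0 (S n' - k0)%nat b) (Cinv (f0 b))))).
    { rewrite RB by lia. f_equal.
      rewrite (sumC_single (fun j => Cmult (cl j) (Q j (S (n' - k0)) b)) (S n') k0) by
        (first [lia | intros j Hj Hjk; unfold cl; destruct (Nat.ltb_spec j (S k0));
         [rewrite (proj1 (QZb j Hj)) by lia; Cring | Cring]]).
      unfold cl. replace (Nat.ltb k0 (S k0)) with true by (symmetry; apply Nat.ltb_lt; lia).
      replace (S (n' - k0)) with (S n' - k0)%nat by lia.
      rewrite (proj2 (QZb k0 ltac:(lia))). reflexivity. }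
    assert (Rq0 : forall x, inI a b x -> Im (q k0 x) = 0) by (intros; apply Qreal; auto).
    assert (Rp1 : forall x, inI a b x -> Im (p (S k0) x) = 0) by (intros; apply Preal; auto; lia).
    assert (Rp0 : forall x, inI a b x -> Im (p k0 x) = 0) by (intros; apply Preal; auto; lia).
    assert (s1 : 0 < Re (Qq k0 k0 a)).
    { apply (sign_a a b n' (q k0) (Qq k0) k0 Hab (HQq k0 Hk0) Rq0 Hk0).
      - apply QqZa; auto.
      - apply QqZa; auto.
      - exists dq; split; auto; intros x Hx Hxa; apply Qnn; auto. }
    assert (s2 : 0 < Re (P (S k0) (S k0) a)).
    { apply (sign_a a b (S n') (p (S k0)) (P (S k0)) (S k0) Hab (HP (S k0) ltac:(lia)) Rp1 ltac:(lia)).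
      - apply PZa; lia.
      - apply PZa; lia.
      - exists dp; split; auto; intros x Hx Hxa; apply Pnn; auto; lia. }
    assert (s3 : 0 < (-1) ^ (n' - k0) * Re (Qq k0 (n' - k0)%nat b)).
    { apply (sign_b a b n' (q k0) (Qq k0) (n' - k0) Hab (HQq k0 Hk0) Rq0 ltac:(lia)).
      - apply QqZb; auto.
      - apply QqZb; auto.
      - exists dq; split; auto; intros x Hx Hxa; apply Qnn; auto. }
    assert (s4 : 0 < (-1) ^ (S n' - k0) * Re (P k0 (S n' - k0)%nat b)).
    { apply (sign_b a b (S n') (p k0) (P k0) (S n' - k0) Hab (HP k0 ltac:(lia)) Rp0 ltac:(lia)).
      - apply PZb; lia.
      - apply PZb; lia.
      - exists dp; split; auto; intros x Hx Hxa; apply Pnn; auto; lia. }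
    replace (S n' - k0)%nat with (S (n' - k0)) in s4 by lia. simpl in s4.
    apply (final_alg (g k0) (Qq k0 k0 a) (P (S k0) (S k0) a) (f0 a) (Qq k0 (n' - k0)%nat b)
             (P k0 (S n' - k0)%nat b) (f0 b) (beta (S k0)) (beta k0) ((-1) ^ (n' - k0))).
    - exact (derivs_real a b n' (q k0) (Qq k0) Hab (HQq k0 Hk0) Rq0 k0 Hk0 a Ha).
    - exact (derivs_real a b (S n') (p (S k0)) (P (S k0)) Hab (HP (S k0) ltac:(lia)) Rp1 (S k0) ltac:(lia) a Ha).
    - exact (proj1 (Hpos a Ha)).
    - exact (derivs_real a b n' (q k0) (Qq k0) Hab (HQq k0 Hk0) Rq0 (n' - k0) ltac:(lia) b Hb).
    - exact (derivs_real a b (S n') (p k0) (P k0) Hab (HP k0 ltac:(lia)) Rp0 (S n' - k0) ltac:(lia) b Hb).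
    - exact (proj1 (Hpos b Hb)).
    - apply BR. lia.
    - apply BR. lia.
    - auto.
    - auto.
    - exact (proj2 (Hpos a Ha)).
    - exact (proj2 (Hpos b Hb)).
    - auto.
    - replace (S n' - k0)%nat with (S (n' - k0)) by lia. lra.
    - auto.
    - rewrite EA. simpl. exact EA'.
    - rewrite EB. simpl. exact EB'. }
  intros k Hk. split; [apply BR; auto|].
  induction k as [|k IH]; auto. apply Step; [lia|]. apply IH. lia.
Qed.
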